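(* Let $w/u$ be a skew partition of length $r$, $v$ a partition, and $c=(c_1,c_2'):\mathcal D(w/u)\to Y(v)$ a bijection such that (Y) for every $x\in\mathcal D(w/u)$ the set $C(x)=\{c(y): y\le_{LR}x\}$ is a Young diagram, and $c_1$ satisfies (L1) $c_1(i,j)<c_1(i',j)$ whenever $(i,j),(i',j)\in\mathcal D(w/u)$, $i<i'$, and (L2) $c_1(i,j)\le c_1(i,j')$ whenever $(i,j),(i,j')\in\mathcal D(w/u)$, $j<j'$. Then $c_1$ also satisfies (L3): for all $x\in\mathcal D(w/u)$ and $k\in\mathbb N^*$, $\sigma_k(x)\ge\sigma_{k+1}(x)$ where $\sigma_k(x)=\operatorname{card}\{y\le_{LR}x: c_1(y)=k\}$; and moreover $c_2'=c_2$, where $c_2(x)=\operatorname{card}\{y\le_{LR}x: c_1(y)=c_1(x)\}$.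
   Context: A generalized partition of length $r$ is a weakly decreasing integer sequence $u=(u_1,\dots,u_r)$, with $\mathcal D(u)=\{(i,j)\in\{1,\dots,r\}\times\mathbb Z: j\le u_i\}$; a skew partition $w/u$ means $\mathcal D(u)\subset\mathcal D(w)$, $\mathcal D(w/u)=\mathcal D(w)\setminus\mathcal D(u)$. For a partition $v$, $Y(v)=\{(i,j): i\ge1,\ 1\le j\le v_i\}$; a Young diagram is a set of the form $Y(\mu)$ for a partition $\mu$. The LR order on $\mathcal D(w/u)$ is the total order with $(i,j)<_{LR}(i',j')$ if $i<i'$, and $(i,j)<_{LR}(i,j')$ if $j>j'$. *)

(* Defs.v *)
From mathcomp Require Import all_boot all_order all_algebra.
Set Implicit Arguments. Unset Strict Implicit. Unset Printing Implicit Defensive.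
Import Order.TTheory GRing.Theory Num.Theory.

(* Cells of generalized diagrams: (row, column) with row : nat (1-based), column : int. *)
Definition gcell := (nat * int)%type.
(* Cells of Young diagrams: (row, column), both 1-based naturals. *)
Definition ycell := (nat * nat)%type.

Definition gpart_at (u : seq int) (i : nat) : int := nth 0%R u i.-1.
Definition part_at (v : seq nat) (i : nat) : nat := nth 0%N v i.-1.

Definition gen_partition (u : seq int) : bool := sorted (fun a b : int => (b <= a)%R) u.
(* partition: weakly decreasing sequence of naturals (trailing zeros allowed) *)
Definition is_partition (v : seq nat) : bool := sorted geq v.

Definition skew_partition (r : nat) (w u : seq int) : Prop :=
  [/\ gen_partition w, gen_partition u, size w = r, size u = r &
      forall i, (1 <= i <= r)%N -> (gpart_at u i <= gpart_at w i)%R].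

Definition inD (w u : seq int) (x : gcell) : bool :=
  (1 <= x.1 <= size u)%N && ((gpart_at u x.1 < x.2)%R && (x.2 <= gpart_at w x.1)%R).

Definition cellsD (w u : seq int) : seq gcell :=
  flatten [seq [seq (i, gpart_at u i + (k.+1)%:Z)%R
               | k <- iota 0 `|gpart_at w i - gpart_at u i|%N]
          | i <- iota 1 (size u)].

Definition inY (v : seq nat) (p : ycell) : bool :=
  (1 <= p.1)%N && (1 <= p.2 <= part_at v p.1)%N.

Definition leLR (y x : gcell) : bool :=
  (y.1 < x.1)%N || ((y.1 == x.1) && (x.2 <= y.2)%R).

Definition young_diagram (S : ycell -> Prop) : Prop :=
  exists mu : seq nat, is_partition mu /\ forall p, S p <-> inY mu p.

Definition Cset (w u : seq int) (c : gcell -> ycell) (x : gcell) : ycell -> Prop :=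
  fun p => exists y, [/\ inD w u y, leLR y x & c y = p].

Definition sigma (w u : seq int) (c1 : gcell -> nat) (k : nat) (x : gcell) : nat :=
  count (fun y => leLR y x && (c1 y == k)) (cellsD w u).

Definition c2 (w u : seq int) (c1 : gcell -> nat) (x : gcell) : nat :=
  sigma w u c1 (c1 x) x.

(* Main.v *)
Require Import Defs.
From mathcomp Require Import all_boot all_order all_algebra zify.
Import Order.TTheory GRing.Theory Num.Theory.

Lemma flatten_uniq_fst (T : eqType) (f : nat -> seq (nat * T)) (s : seq nat) :
  uniq s -> (forall i, uniq (f i)) -> (forall i y, y \in f i -> y.1 = i) ->
  uniq (flatten [seq f i | i <- s]).
Proof.
move=> Us Uf Ff; elim: s Us => [|i s IH] //= /andP [ni us].
rewrite cat_uniq Uf IH // andbT /=; apply/hasPn => y /flattenP [t /mapP [j js ->] yj].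
apply/negP => yi; have e1 := Ff _ _ yi; have e2 := Ff _ _ yj.
have ej : j = i by rewrite -e1 -e2.
by move: ni; rewrite -ej js.
Qed.

Lemma cellsD_uniq w u : uniq (cellsD w u).
Proof.
rewrite /cellsD; apply: flatten_uniq_fst; first exact: iota_uniq.
- move=> i; rewrite map_inj_uniq ?iota_uniq // => k k' [] h; lia.
- by move=> i y /mapP [k _ ->].
Qed.

Lemma cellsD_mem r w u y : skew_partition r w u -> (y \in cellsD w u) = inD w u y.
Proof.
case=> _ _ sw su le; rewrite /cellsD /inD.
apply/idP/idP.
- move=> /flattenP [t /mapP [i ii ->] /mapP [k kk ->]] /=.
  move: ii kk; rewrite !mem_iota => ii kk.
  have h : (gpart_at u i <= gpart_at w i)%R by apply: le; lia.
  apply/andP; split; first lia. lia.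
- case: y => i j /= /andP [ii /andP [h1 h2]].
  apply/flattenP; exists [seq (i, (gpart_at u i + (k.+1)%:Z)%R) | k <- iota 0 `|gpart_at w i - gpart_at u i|%N].
  + by apply/mapP; exists i => //; rewrite mem_iota; lia.
  + apply/mapP; exists `|(j - gpart_at u i - 1)%R|%N.
    * rewrite mem_iota; lia.
    * congr pair; lia.
Qed.

Lemma sigma_row r w u (c : gcell -> ycell) x mu k :
  skew_partition r w u ->
  (forall x y, inD w u x -> inD w u y -> c x = c y -> x = y) ->
  (forall p, Cset w u c x p <-> inY mu p) -> (1 <= k)%N ->
  sigma w u (fun y => (c y).1) k x = part_at mu k.
Proof.
move=> sk inj hC k1; rewrite /sigma -size_filter.
set s := filter _ _.
have us : uniq s by rewrite filter_uniq // cellsD_uniq.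
have ms : forall y, (y \in s) = [&& leLR y x, (c y).1 == k & inD w u y].
  by move=> y; rewrite mem_filter (@cellsD_mem r w u y sk) andbA.
rewrite -(size_map c s).
have ucs : uniq (map c s).
  rewrite map_inj_in_uniq // => y z; rewrite !ms => /and3P [_ _ ?] /and3P [_ _ ?].
  exact: inj.
have pe : perm_eq (map c s) [seq (k, j) | j <- iota 1 (part_at mu k)].
  apply: uniq_perm => //; first by rewrite map_inj_uniq ?iota_uniq // => a b [].
  case=> a b; apply/idP/idP.
  - move=> /mapP [y]; rewrite ms => /and3P [ly /eqP cy dy] e.
    have : inY mu (c y) by apply/hC; exists y.
    rewrite -e /inY /= => /andP [_ hb]; apply/mapP; exists b.
    + rewrite mem_iota; have ak : a = k by rewrite -cy -e.
      rewrite -ak; lia.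
    + by rewrite -cy -e.
  - move=> /mapP [j]; rewrite mem_iota => hj [-> ->].
    have [y [dy ly cy]] : Cset w u c x (k, j) by apply/hC; rewrite /inY /=; lia.
    apply/mapP; exists y => //; rewrite ms ly dy cy /= eqxx //.
by rewrite (perm_size pe) size_map size_iota.
Qed.

Lemma leLR_anti x y : leLR x y -> leLR y x -> x = y.
Proof.
case: x => x1 x2; case: y => y1 y2; rewrite /leLR /= => h1 h2.
have e1 : x1 = y1 by lia.
have e2 : x2 = y2 by lia.
by rewrite e1 e2.
Qed.

Lemma sorted_geq_nth (s : seq nat) i : sorted geq s -> (nth 0 s i.+1 <= nth 0 s i)%N.
Proof.
elim: s i => [|a t IH] i hs; first by [].
case: i => [|i] /=.
- by case: t hs {IH} => [|b t] //= /andP [].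
- by apply: IH; exact: (path_sorted hs).
Qed.

Theorem lemma4p8 (r : nat) (w u : seq int) (v : seq nat) (c : gcell -> ycell) :
  skew_partition r w u ->
  is_partition v ->
  (* c is a bijection D(w/u) -> Y(v) *)
  (forall x, inD w u x -> inY v (c x)) ->
  (forall x y, inD w u x -> inD w u y -> c x = c y -> x = y) ->
  (forall p, inY v p -> exists x, inD w u x /\ c x = p) ->
  (* (Y) *)
  (forall x, inD w u x -> young_diagram (Cset w u c x)) ->
  (* (L1) *)
  (forall (i i' : nat) (j : int), inD w u (i, j) -> inD w u (i', j) ->
     (i < i')%N -> ((c (i, j)).1 < (c (i', j)).1)%N) ->
  (* (L2) *)
  (forall (i : nat) (j j' : int), inD w u (i, j) -> inD w u (i, j') ->
     (j < j')%R -> ((c (i, j)).1 <= (c (i, j')).1)%N) ->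
  (* (L3) and c_2' = c_2 *)
  (forall x k, inD w u x -> (1 <= k)%N ->
     (sigma w u (fun y => (c y).1) k.+1 x <= sigma w u (fun y => (c y).1) k x)%N) /\
  (forall x, inD w u x -> (c x).2 = c2 w u (fun y => (c y).1) x).
Proof.
move=> sk _ cY inj _ HY _ _; split.
- move=> x k dx k1; have [mu [pm hC]] := HY x dx.
  rewrite !(@sigma_row _ _ _ _ _ _ _ sk inj hC) //.
  rewrite /part_at /=; case: k k1 => [|k] // _ /=.
  exact: sorted_geq_nth.
- move=> x dx; have [mu [pm hC]] := HY x dx.
  rewrite /c2; have := cY x dx; case ec: (c x) => [a b] /= /andP [a1 /andP [b1 _]].
  rewrite (@sigma_row _ _ _ _ _ _ _ sk inj hC) //.
  have : inY mu (a, b) by apply/hC; exists x; rewrite /leLR ltnn eqxx lexx /=.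
  rewrite /inY /= => /andP [_ /andP [_ hb]].
  apply/eqP; rewrite eqn_leq hb /= leqNgt; apply/negP => hlt.
  have [y [dy ly cy]] : Cset w u c x (a, part_at mu a).
    apply/hC; rewrite /inY /= leqnn andbT; simpl in a1; apply/andP; split => //; lia.
  have [mu' [_ hC']] := HY y dy.
  have : inY mu' (a, part_at mu a) by apply/hC'; exists y; rewrite /leLR ltnn eqxx lexx /=.
  rewrite /inY /= => /andP [_ /andP [_ hb']].
  have [z [dz lz cz]] : Cset w u c y (a, b).
    apply/hC'; rewrite /inY /=; simpl in a1, b1; apply/andP; split => //; apply/andP; split => //; lia.
  have zx : z = x by apply: inj => //; rewrite cz ec.
  subst z; have yx := leLR_anti _ _ ly lz; subst y.
  move: cy; rewrite ec => -[] e; lia.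
Qed.
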